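(* For every $t\in\mathbb Q_{\ge0}\cup\{\infty\}$ (written as a reduced fraction $p/q$ with $p,q\ge0$, $\infty=\frac10$), the word $\omega_t$ is a reduced word in the free group on $\{x,y,z\}$.
   Context: Modified lattice: the planar graph with vertex set $\mathbb Z^2$ whose edges are the horizontal unit segments $[(i,j),(i+1,j)]$, the vertical unit segments $[(i,j),(i,j+1)]$, and the diagonal segments of slope $-1$ joining $(i,j+1)$ and $(i+1,j)$. Words $\omega_t$: set $\omega_{0/1}=x$, $\omega_{1/0}=z$. For a reduced fraction $t=p/q\in(0,\infty)$, let $L_t$ be the segment from $(0,0)$ to $(q,p)$, oriented from $(0,0)$ to $(q,p)$. List the edges of the modified lattice whose relative interior meets $L_t$, in the order of the intersection points along $L_t$. A horizontal (resp. diagonal, vertical) edge contributes the letter $x$ (resp. $y$, $z$) if the midpoint of the edge is not on the right-hand side of the oriented segment $L_t$ (including the case that the midpoint lies on $L_t$), and contributes $x^{-1}$ (resp. $y^{-1}$, $z^{-1}$) if the midpoint is on the right-hand side. The word $\omega_t$ is the concatenation of these letters in order. *)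

(* Defs.v *)
From HB Require Import structures.
From mathcomp Require Import all_boot all_order all_algebra.
Set Implicit Arguments. Unset Strict Implicit. Unset Printing Implicit Defensive.
Import Order.TTheory GRing.Theory Num.Theory.
Local Open Scope ring_scope.

Inductive gen := gx | gy | gz.
Definition gen_code (g : gen) : nat := match g with gx => 0 | gy => 1 | gz => 2 end%N.
Definition gen_decode (n : nat) : gen := match n with 0 => gx | 1 => gy | _ => gz end%N.
Lemma gen_codeK : cancel gen_code gen_decode. Proof. by case. Qed.
HB.instance Definition _ := Equality.copy gen (can_type gen_codeK).

(* a letter: (generator, true) = g, (generator, false) = g^{-1} *)
Definition letter := (gen * bool)%type.
Definition word := seq letter.

Fixpoint reduced (w : word) : bool :=
  match w with
  | a :: ((b :: _) as w') => ~~ ((a.1 == b.1) && (a.2 != b.2)) && reduced w'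
  | _ => true
  end.

Inductive ekind := EH | ED | EV.
Definition edge := (ekind * (int * int))%type.
Definition pt := (rat * rat)%type.

Definition edge_ends (e : edge) : pt * pt :=
  let: (k, (i, j)) := e in
  let i' : rat := i%:~R in let j' : rat := j%:~R in
  match k with
  | EH => ((i', j'), (i' + 1, j'))
  | ED => ((i', j' + 1), (i' + 1, j'))
  | EV => ((i', j'), (i', j' + 1))
  end.

Definition edge_gen (e : edge) : gen :=
  match e.1 with EH => gx | ED => gy | EV => gz end.

(* The edges that can possibly meet the segment from (0,0) to (q,p): all edges
   with base vertex (i,j), -1 <= i <= q, -1 <= j <= p (every edge whose closure
   meets the box [0,q]x[0,p] is of this form). *)
Definition irange (n : nat) : seq int := [seq (k%:Z - 1)%R | k <- iota 0 (n + 2)].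
Definition candidate_edges (p q : nat) : seq edge :=
  [seq (k, ij) | k <- [:: EH; ED; EV], ij <- [seq (i, j) | i <- irange q, j <- irange p]].

(* Parameter s in [0,1] of the intersection point s*(q,p) of the closed segment
   L from (0,0) to P=(q,p) with the relative interior of edge e, when the two
   are not parallel (Cramer's rule); None if they do not meet (or are parallel,
   which never happens for p,q >= 1). *)
Definition cross_param (p q : nat) (e : edge) : option rat :=
  let: (A, B) := edge_ends e in
  let Px : rat := q%:R in let Py : rat := p%:R in
  let dx := B.1 - A.1 in let dy := B.2 - A.2 in
  let det := dx * Py - Px * dy in
  if det == 0 then None else
  let s := (dx * A.2 - A.1 * dy) / det in
  let u := (Px * A.2 - Py * A.1) / det in
  if (0 <= s) && (s <= 1) && (0 < u) && (u < 1) then Some s else None.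

Definition edge_sign (p q : nat) (e : edge) : bool :=
  let: (A, B) := edge_ends e in
  let Mx := (A.1 + B.1) / 2 in let My := (A.2 + B.2) / 2 in
  0 <= (q%:R : rat) * My - (p%:R : rat) * Mx.

Definition crossings (p q : nat) : seq (rat * letter) :=
  pmap (fun e => match cross_param p q e with
                 | Some s => Some (s, (edge_gen e, edge_sign p q e))
                 | None => None end) (candidate_edges p q).

Definition omega (p q : nat) : word :=
  if p == 0%N then [:: (gx, true)]
  else if q == 0%N then [:: (gz, true)]
  else [seq c.2 | c <- sort (fun a b : rat * letter => a.1 <= b.1) (crossings p q)].

(* Main.v *)
Require Import Defs.
From HB Require Import structures.
From mathcomp Require Import all_boot all_order all_algebra.
From mathcomp Require Import ring lra zify.
Set Implicit Arguments. Unset Strict Implicit. Unset Printing Implicit Defensive.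
Import Order.TTheory GRing.Theory Num.Theory.
Local Open Scope ring_scope.

Definition ek_code (g : ekind) : nat := match g with EH => 0 | ED => 1 | EV => 2 end%N.
Definition ek_decode (n : nat) : ekind := match n with 0 => EH | 1 => ED | _ => EV end%N.
Lemma ek_codeK : cancel ek_code ek_decode. Proof. by case. Qed.
HB.instance Definition _ := Equality.copy ekind (can_type ek_codeK).

Section S.
Variables (p q : nat).
Hypotheses (hp : (0 < p)%N) (hq : (0 < q)%N) (hc : coprime p q).
Local Notation P := (p%:R : rat).
Local Notation Q := (q%:R : rat).
Lemma P0 : P != 0. Proof. by rewrite pnatr_eq0 -lt0n. Qed.
Lemma Q0 : Q != 0. Proof. by rewrite pnatr_eq0 -lt0n. Qed.
Lemma PQ0 : P + Q != 0. Proof. by rewrite -natrD pnatr_eq0 addn_eq0 negb_and -!lt0n hp. Qed.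

Lemma cpH (i j : int) : cross_param p q (EH, (i, j)) =
  let s := j%:~R / P in
  if (0 <= s <= 1) && (0 < s * Q - i%:~R) && (s * Q - i%:~R < 1) then Some s else None.
Proof.
rewrite /cross_param /=.
have e1 : (i%:~R + 1 - i%:~R) = 1 :> rat by ring.
have e2 : (j%:~R - j%:~R) = 0 :> rat by ring.
rewrite e1 e2 mulr0 subr0 !mul1r mulr0 subr0 (negbTE P0).
have -> : (q%:R * j%:~R - p%:R * i%:~R) / P = j%:~R / P * Q - i%:~R.
  by field; exact: P0.
by [].
Qed.

Lemma cpV (i j : int) : cross_param p q (EV, (i, j)) =
  let s := i%:~R / Q in
  if (0 <= s <= 1) && (0 < s * P - j%:~R) && (s * P - j%:~R < 1) then Some s else None.
Proof.
rewrite /cross_param /=.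
have e1 : (i%:~R - i%:~R) = 0 :> rat by ring.
have e2 : (j%:~R + 1 - j%:~R) = 1 :> rat by ring.
rewrite e1 e2 ?mul0r ?mulr0 ?mulr1 ?sub0r ?subr0 ?oppr_eq0 (negbTE Q0).
have -> : (1 *- q : rat) = - Q by [].
have -> : (q%:R * j%:~R - p%:R * i%:~R) / - Q = i%:~R / Q * P - j%:~R.
  by field; exact: Q0.
have -> : - i%:~R / - Q = i%:~R / Q :> rat by rewrite invrN mulrNN.
by [].
Qed.

Lemma cpD (i j : int) : cross_param p q (ED, (i, j)) =
  let s := (i%:~R + j%:~R + 1) / (P + Q) in
  if (0 <= s <= 1) && (0 < s * Q - i%:~R) && (s * Q - i%:~R < 1) then Some s else None.
Proof.
rewrite /cross_param /=.
have e1 : (i%:~R + 1 - i%:~R) = 1 :> rat by ring.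
have e2 : (j%:~R - (j%:~R + 1)) = -1 :> rat by ring.
rewrite e1 e2 !mul1r mulrN1 opprK (negbTE PQ0) mulrN1 opprK.
have -> : (q%:R * (j%:~R + 1) - p%:R * i%:~R) / (P + Q) = (i%:~R + j%:~R + 1) / (P + Q) * Q - i%:~R.
  by field; exact: PQ0.
by rewrite (addrC (j%:~R + 1)) addrA.
Qed.

Lemma fl (m : int) (x : rat) : m%:~R <= x -> x < m%:~R + 1 -> Num.floor x = m.
Proof. by move=> h1 h2; apply: floor_def; rewrite intrD h1 h2. Qed.

Lemma nt (n d : nat) (a b : int) : coprime n d -> 0 < a -> a < n%:Z -> 0 <= b ->
  a%:~R * d%:R = b%:~R * n%:R :> rat -> False.
Proof.
case: a => // an; case: b => // bn cop han hn _.
rewrite -!pmulrn -!natrM => /eqP; rewrite eqr_nat => /eqP E.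
have : (n %| an * d)%N by rewrite E dvdn_mull.
rewrite Gauss_dvdl // => /dvdn_leq; rewrite ltz_nat in han hn.
by move=> /(_ han); rewrite leqNgt hn.
Qed.

Definition F s g (i j : int) : Prop := match g with
 | gx => s * P = j%:~R /\ i%:~R < s * Q < i%:~R + 1
 | gz => s * Q = i%:~R /\ j%:~R < s * P < j%:~R + 1
 | gy => [/\ i%:~R < s * Q < i%:~R + 1, j%:~R < s * P < j%:~R + 1
           & s * Q + s * P = i%:~R + j%:~R + 1] end.

Lemma F_floor s g i j : F s g i j -> i = Num.floor (s * Q) /\ j = Num.floor (s * P).
Proof.
case: g => /=.
- move=> [h /andP[h1 h2]]; split; apply/esym/fl; rewrite ?h; lra.
- move=> [/andP[h1 h2] /andP[h3 h4] _]; split; apply/esym/fl; lra.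
- move=> [h /andP[h1 h2]]; split; apply/esym/fl; rewrite ?h; lra.
Qed.

Definition kind_of g := match g with gx => EH | gy => ED | gz => EV end.

Lemma crossE s g b : (s, (g, b)) \in crossings p q -> exists e,
  [/\ e \in candidate_edges p q, cross_param p q e = Some s, edge_gen e = g & edge_sign p q e = b].
Proof.
rewrite /crossings mem_pmap => /mapP [e He].
case E: (cross_param p q e) => [s'|] //= [-> -> ->].
by exists e.
Qed.

Lemma crossI e s : e \in candidate_edges p q -> cross_param p q e = Some s ->
  (s, (edge_gen e, edge_sign p q e)) \in crossings p q.
Proof. by move=> He E; rewrite /crossings mem_pmap; apply/mapP; exists e; rewrite ?E. Qed.

Lemma facts s g b : (s, (g, b)) \in crossings p q -> (0 <= s <= 1) /\
  exists i j, F s g i j /\ b = edge_sign p q (kind_of g, (i, j)).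
Proof.
move=> /crossE [[k [i j]] [_ E <- <-]].
case: k E => /=; [rewrite cpH | rewrite cpD | rewrite cpV] => /=;
  case: ifP => // /andP[/andP[/andP[h0 h1] hu0] hu1] [<-]; split; rewrite ?h0 ?h1 //;
  exists i, j; split => //=.
- split; first by rewrite divfK ?P0.
  apply/andP; split; lra.
- have hs : (i%:~R + j%:~R + 1) / (P + Q) * Q + (i%:~R + j%:~R + 1) / (P + Q) * P
            = i%:~R + j%:~R + 1.
    by rewrite -mulrDr (addrC Q) divfK ?PQ0.
  by split; try (apply/andP; split); lra.
- split; first by rewrite divfK ?Q0.
  apply/andP; split; lra.
Qed.


Lemma same s g b1 b2 : (s, (g, b1)) \in crossings p q -> (s, (g, b2)) \in crossings p q -> b1 = b2.
Proof.
move=> /facts [_ [i1 [j1 [F1 ->]]]] /facts [_ [i2 [j2 [F2 ->]]]].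
have [-> ->] := F_floor F1; by have [-> ->] := F_floor F2.
Qed.

Lemma mem_irange n (z : int) : -1 <= z -> z <= n%:Z -> z \in irange n.
Proof.
move=> h1 h2; rewrite /irange; apply/mapP; exists (absz (z + 1)); last by lia.
rewrite mem_iota; lia.
Qed.

Lemma mem_cand k (i j : int) : -1 <= i -> i <= q%:Z -> -1 <= j -> j <= p%:Z ->
  (k, (i, j)) \in candidate_edges p q.
Proof.
move=> h1 h2 h3 h4; rewrite /candidate_edges.
apply: allpairs_f; first by case: k.
by apply: allpairs_f; apply: mem_irange.
Qed.

Lemma zlt (a b : int) : a%:~R < b%:~R :> rat -> a < b.
Proof. by rewrite ltr_int. Qed.
Lemma zle (a b : int) : a%:~R <= b%:~R :> rat -> a <= b.
Proof. by rewrite ler_int. Qed.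
Lemma Pz : P = (p%:Z)%:~R. Proof. by rewrite pmulrn. Qed.
Lemma Qz : Q = (q%:Z)%:~R. Proof. by rewrite pmulrn. Qed.
Lemma z0 : 0 = (0%:Z)%:~R :> rat. Proof. by []. Qed.
Lemma z1 : 1 = (1%:Z)%:~R :> rat. Proof. by []. Qed.

Lemma posP s : 0 < s -> s < 1 -> 0 < s * P /\ s * P < P.
Proof.
move=> s0 s1; have P1 : 0 < P by rewrite ltr0n.
split; first exact: mulr_gt0.
by rewrite -[X in _ < X](mul1r P) ltr_pM2r.
Qed.
Lemma posQ s : 0 < s -> s < 1 -> 0 < s * Q /\ s * Q < Q.
Proof.
move=> s0 s1; have P1 : 0 < Q by rewrite ltr0n.
split; first exact: mulr_gt0.
by rewrite -[X in _ < X](mul1r Q) ltr_pM2r.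
Qed.

Lemma exH (j : int) s : 0 < s -> s < 1 -> s * P = j%:~R ->
  exists b, (s, (gx, b)) \in crossings p q.
Proof.
move=> s0 s1 hj.
set i := Num.floor (s * Q).
have hi1 := floor_le (s * Q). have hi2 := floorD1_gt (s * Q). rewrite intrD in hi2.
have [sP0 sP1] := posP s0 s1. have [sQ0 sQ1] := posQ s0 s1.
have ne : i%:~R != s * Q.
  apply/eqP => E; apply: (nt (n:=p) (d:=q) (a:=j) (b:=i)) => //.
  - by apply: zlt; rewrite -z0 -hj.
  - by apply: zlt; rewrite -Pz -hj.
  - by apply: zle; rewrite -z0 E ltW.
  - by rewrite -hj E; ring.
exists (edge_sign p q (EH, (i, j))).
apply (@crossI (EH, (i, j)) s).
- apply: mem_cand.
  + have : 0 <= i by rewrite floor_ge0 ltW. lia.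
  + by apply: zle; rewrite -Qz; lra.
  + have : 0 < j by apply: zlt; rewrite -z0 -hj. lia.
  + by apply: zle; rewrite -Pz -hj; lra.
- rewrite cpH /=.
  have -> : j%:~R / P = s by rewrite -hj mulfK ?P0.
  have hl : i%:~R < s * Q by rewrite lt_neqAle ne hi1.
  rewrite ifT //; apply/andP; split; [apply/andP; split|]; first (apply/andP; split); lra.
Qed.

Lemma exV (i : int) s : 0 < s -> s < 1 -> s * Q = i%:~R ->
  exists b, (s, (gz, b)) \in crossings p q.
Proof.
move=> s0 s1 hi.
set j := Num.floor (s * P).
have hj1 := floor_le (s * P). have hj2 := floorD1_gt (s * P). rewrite intrD in hj2.
have [sP0 sP1] := posP s0 s1. have [sQ0 sQ1] := posQ s0 s1.
have ne : j%:~R != s * P.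
  apply/eqP => E; apply: (nt (n:=q) (d:=p) (a:=i) (b:=j)) => //.
  - by rewrite coprime_sym.
  - by apply: zlt; rewrite -z0 -hi.
  - by apply: zlt; rewrite -Qz -hi.
  - by apply: zle; rewrite -z0 E ltW.
  - by rewrite -hi E; ring.
exists (edge_sign p q (EV, (i, j))).
apply (@crossI (EV, (i, j)) s).
- apply: mem_cand.
  + have : 0 < i by apply: zlt; rewrite -z0 -hi. lia.
  + by apply: zle; rewrite -Qz -hi; lra.
  + have : 0 <= j by rewrite floor_ge0 ltW. lia.
  + by apply: zle; rewrite -Pz; lra.
- rewrite cpV /=.
  have -> : i%:~R / Q = s by rewrite -hi mulfK ?Q0.
  have hl : j%:~R < s * P by rewrite lt_neqAle ne hj1.
  rewrite ifT //; apply/andP; split; [apply/andP; split|]; first (apply/andP; split); lra.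
Qed.

Lemma exD (k : int) s : 0 < s -> s < 1 -> s * Q + s * P = k%:~R ->
  exists b, (s, (gy, b)) \in crossings p q.
Proof.
move=> s0 s1 hk.
set i := Num.floor (s * Q).
have hi1 := floor_le (s * Q). have hi2 := floorD1_gt (s * Q). rewrite intrD in hi2.
have [sP0 sP1] := posP s0 s1. have [sQ0 sQ1] := posQ s0 s1.
have PQz : P + Q = ((p + q)%N%:Z)%:~R by rewrite -natrD -pmulrn.
have ne : i%:~R != s * Q.
  apply/eqP => E; apply: (nt (n:=(p + q)%N) (d:=q) (a:=k) (b:=i)) => //.
  - by rewrite /coprime gcdnC gcdnDr gcdnC.
  - by apply: zlt; rewrite -z0 -hk; lra.
  - by apply: zlt; rewrite -PQz -hk; lra.
  - by apply: zle; rewrite -z0 E ltW.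
  - by rewrite natrD -hk E; ring.
have ej : (i%:~R + (k - 1 - i)%:~R + 1 : rat) = k%:~R by rewrite !rmorphB /=; ring.
exists (edge_sign p q (ED, (i, k - 1 - i))).
apply (@crossI (ED, (i, k - 1 - i)) s).
- have hl : i%:~R < s * Q by rewrite lt_neqAle ne hi1.
  apply: mem_cand.
  + have : 0 <= i by rewrite floor_ge0 ltW. lia.
  + by apply: zle; rewrite -Qz; lra.
  + have : i <= k by apply: zle; lra.
    lia.
  + have : k < i + 1 + p%:Z by apply: zlt; rewrite !rmorphD /= -Pz; lra.
    lia.
- rewrite cpD /= ej.
  have -> : k%:~R / (P + Q) = s by rewrite -hk addrC -mulrDr mulfK ?PQ0.
  have hl : i%:~R < s * Q by rewrite lt_neqAle ne hi1.
  rewrite ifT //; apply/andP; split; [apply/andP; split|]; first (apply/andP; split); lra.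
Qed.

Lemma zltR (a b : int) : a < b -> a%:~R + 1 <= b%:~R :> rat.
Proof. by move=> h; rewrite z1 -intrD ler_int lezD1. Qed.
Lemma zleR (a b : int) : a <= b -> a%:~R <= b%:~R :> rat.
Proof. by rewrite ler_int. Qed.

Lemma mkH (m : int) s1 s2 : 0 <= s1 -> s2 <= 1 -> s1 * P < m%:~R -> m%:~R < s2 * P ->
  exists c, c \in crossings p q /\ s1 < c.1 < s2.
Proof.
move=> h1 h2 l1 l2; have P1 : 0 < P by rewrite ltr0n.
set s := m%:~R / P; have hs : s * P = m%:~R by rewrite divfK ?P0.
have a1 : s1 < s by rewrite -(ltr_pM2r P1) hs.
have a2 : s < s2 by rewrite -(ltr_pM2r P1) hs.
have [b hb] := exH (j := m) (s := s) ltac:(lra) ltac:(lra) hs.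
by exists (s, (gx, b)); split => //=; rewrite a1 a2.
Qed.

Lemma mkV (m : int) s1 s2 : 0 <= s1 -> s2 <= 1 -> s1 * Q < m%:~R -> m%:~R < s2 * Q ->
  exists c, c \in crossings p q /\ s1 < c.1 < s2.
Proof.
move=> h1 h2 l1 l2; have P1 : 0 < Q by rewrite ltr0n.
set s := m%:~R / Q; have hs : s * Q = m%:~R by rewrite divfK ?Q0.
have a1 : s1 < s by rewrite -(ltr_pM2r P1) hs.
have a2 : s < s2 by rewrite -(ltr_pM2r P1) hs.
have [b hb] := exV (i := m) (s := s) ltac:(lra) ltac:(lra) hs.
by exists (s, (gz, b)); split => //=; rewrite a1 a2.
Qed.

Lemma mkD (m : int) s1 s2 : 0 <= s1 -> s2 <= 1 -> s1 * Q + s1 * P < m%:~R ->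
  m%:~R < s2 * Q + s2 * P -> exists c, c \in crossings p q /\ s1 < c.1 < s2.
Proof.
move=> h1 h2 l1 l2; have P1 : 0 < Q + P by rewrite -natrD ltr0n addn_gt0 hp orbT.
rewrite -!mulrDr in l1 l2.
set s := m%:~R / (Q + P); have hs : s * (Q + P) = m%:~R by rewrite divfK // addrC PQ0.
have a1 : s1 < s by rewrite -(ltr_pM2r P1) hs.
have a2 : s < s2 by rewrite -(ltr_pM2r P1) hs.
have hs' : s * Q + s * P = m%:~R by rewrite -mulrDr hs.
have s0 : 0 < s by lra.
have s1' : s < 1 by lra.
have [b hb] := exD s0 s1' hs'.
by exists (s, (gy, b)); split => //=; rewrite a1 a2.
Qed.

Lemma between s1 s2 g b1 b2 : (s1, (g, b1)) \in crossings p q -> (s2, (g, b2)) \in crossings p q ->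
  s1 < s2 -> exists c, c \in crossings p q /\ s1 < c.1 < s2.
Proof.
move=> /facts [/andP[h10 h11] [i1 [j1 [F1 _]]]] /facts [/andP[h20 h21] [i2 [j2 [F2 _]]]] lt.
have mP : s1 * P < s2 * P by rewrite ltr_pM2r // ltr0n.
have mQ : s1 * Q < s2 * Q by rewrite ltr_pM2r // ltr0n.
case: g F1 F2 => /=.
- move=> [e1 /andP[a1 a2]] [e2 /andP[c1 c2]].
  have ij : j1 < j2 by apply: zlt; rewrite -e1 -e2.
  have ij' := zltR ij.
  case: (boolP (i1 < i2)) => hi.
  + have := zltR hi => hi'; apply: (mkV (m := i2)) => //; lra.
  + have : i1 < i2 + 1 by apply: zlt; rewrite intrD; lra.
    move=> hi2; have ei : i1 = i2 by lia.
    subst i2; apply: (mkD (m := i1 + j1 + 1)) => //; rewrite !intrD; lra.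
- move=> [/andP[a1 a2] /andP[a3 a4] a5] [/andP[c1 c2] /andP[c3 c4] c5].
  case: (boolP (i1 < i2)) => hi.
  + have hi' := zltR hi; apply: (mkV (m := i2)) => //; clear -a2 hi'; lra.
  case: (boolP (j1 < j2)) => hj.
  + have hj' := zltR hj; apply: (mkH (m := j2)) => //; clear -a4 hj'; lra.
  have hi' : i2 <= i1 by rewrite leNgt.
  have hj' : j2 <= j1 by rewrite leNgt.
  have := zleR hi'; have := zleR hj'; clear -a5 c5 mP mQ; lra.
- move=> [e1 /andP[a1 a2]] [e2 /andP[c1 c2]].
  have ij : i1 < i2 by apply: zlt; rewrite -e1 -e2.
  have ij' := zltR ij.
  case: (boolP (j1 < j2)) => hj.
  + have := zltR hj => hj'; apply: (mkH (m := j2)) => //; lra.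
  + have : j1 < j2 + 1 by apply: zlt; rewrite intrD; lra.
    move=> hj2; have ej : j1 = j2 by lia.
    subst j2; apply: (mkD (m := i1 + j1 + 1)) => //; rewrite !intrD; lra.
Qed.

End S.

Lemma red_sorted (l : seq (rat * letter)) :
  sorted (fun a b : rat * letter => a.1 <= b.1) l ->
  (forall a b, a \in l -> b \in l -> a.2.1 = b.2.1 -> a.1 = b.1 -> a.2.2 = b.2.2) ->
  (forall a b, a \in l -> b \in l -> a.2.1 = b.2.1 -> a.1 < b.1 ->
     exists c, c \in l /\ a.1 < c.1 < b.1) ->
  reduced [seq c.2 | c <- l].
Proof.
elim: l => [|a l IH] //; case: l IH => [|b l] IH //= Hs H2 H3.
have tr : transitive (fun a b : rat * letter => a.1 <= b.1).
  by move=> y x z /= h1 h2; apply: le_trans h1 h2.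
move: Hs => /andP [ab Hs].
have Hall : all (fun c : rat * letter => b.1 <= c.1) l.
  by have := order_path_min tr Hs.
apply/andP; split.
- apply/negP => /andP [/eqP eg ns].
  move: ab; rewrite le_eqVlt => /orP [/eqP ea | la].
  + by move: ns; rewrite (H2 a b) ?inE ?eqxx ?orbT ?eqxx.
  + have [c [hc /andP [c1 c2]]] := H3 a b (mem_head _ _) ltac:(by rewrite !inE eqxx orbT) eg la.
    move: hc; rewrite !inE => /orP [/eqP ec | /orP [/eqP ec | hc]].
    * by subst c; move: c1; rewrite ltxx.
    * by subst c; move: c2; rewrite ltxx.
    * by move/allP: Hall => /(_ c hc); rewrite leNgt c2.
- apply: IH => //.
  + by move=> x y hx hy; apply: H2; rewrite inE ?hx ?hy orbT.
  + move=> x y hx hy eg lt.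
    have [c [hc /andP [c1 c2]]] := H3 x y ltac:(by rewrite inE hx orbT) ltac:(by rewrite inE hy orbT) eg lt.
    move: hc; rewrite inE => /orP [/eqP ec | hc]; last by exists c; rewrite hc c1 c2.
    subst c; exfalso.
    have : a.1 <= x.1.
      move: hx; rewrite inE => /orP [/eqP -> // | hx].
      by apply: le_trans ab _; move/allP: Hall => /(_ x hx).
    by rewrite leNgt c1.
Qed.

Theorem proposition3p3 (p q : nat) : coprime p q -> reduced (omega p q).
Proof.
move=> hcop; rewrite /omega.
case: ifP => [//|/negbT]; rewrite -lt0n => hp.
case: ifP => [//|/negbT]; rewrite -lt0n => hq.
set le1 := (fun a b : rat * letter => a.1 <= b.1).
apply: red_sorted.
- apply: sort_sorted => x y; exact: le_total.
- move=> [s1 [g1 b1]] [s2 [g2 b2]]; rewrite !mem_sort /= => h1 h2 eg es.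
  by subst g2 s2; apply: (same hp hq h1 h2).
- move=> [s1 [g1 b1]] [s2 [g2 b2]]; rewrite !mem_sort /= => h1 h2 eg lt.
  subst g2; have [c [hc hb]] := between hp hq hcop h1 h2 lt.
  by exists c; rewrite mem_sort.
Qed.
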